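(* Let $f(x,u)=f_0(x)+\sum_{i=1}^mf_i(x)u_i$ be a control affine system with input set $U=\{u\in\mathbb{R}^m:Au\ge b\}$. Let $I,S,T\subseteq\mathbb{R}^n$ be compact semi-algebraic sets with $I,T\subseteq S$, let $\mathcal{T}>0$ be a time horizon, and let $V(x,t)$ be a smooth function satisfying (C1) $V(x,0)<0$ for all $x\in I$; (C2) $V(x,\mathcal{T})>0$ for all $x\notin \mathrm{int}(T)$; (C3) $V(x,t)>0$ for all $t\in[0,\mathcal{T}]$ and all $x\notin\mathrm{int}(S)$; (C4) for all $t\in[0,\mathcal{T}]$ and all $x\in S$ there exists $u\in U$ with $\dot V(t,x,u)<0$, where $\dot V(t,x,u)=\frac{\partial V}{\partial t}(x,t)+\nabla_x V(x,t)\cdot f(x,u)$. Then there exists a control strategy such that every trajectory of the closed loop system with $x(0)\in I$ satisfies (1) $x(t)\in S$ for all $t\in[0,\mathcal{T}]$ and (2) $x(\mathcal{T})\in\mathrm{int}(T)$.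
   Context: $\mathrm{int}(R)$ denotes the interior of a set $R$. *)

(* Defs.v *)
From HB Require Import structures.
From mathcomp Require Import all_boot all_order all_algebra.
From mathcomp Require Import all_classical all_reals all_analysis.
Set Implicit Arguments. Unset Strict Implicit. Unset Printing Implicit Defensive.
Import Order.TTheory GRing.Theory Num.Theory.
Import numFieldNormedType.Exports.
Local Open Scope classical_set_scope.
Local Open Scope ring_scope.

Inductive pexpr (R : realType) (n : nat) : Type :=
| PConst of R
| PVar of 'I_n
| PAdd of pexpr R n & pexpr R n
| PMul of pexpr R n & pexpr R n.

Fixpoint peval (R : realType) (n : nat) (p : pexpr R n) (x : 'cV[R]_n) : R :=
  match p with
  | PConst c => c
  | PVar i => x i 0
  | PAdd p q => peval p x + peval q x
  | PMul p q => peval p x * peval q x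
  end.

Definition semialgebraic (R : realType) (n : nat) (S : set 'cV[R]_n) : Prop :=
  exists L : seq (seq (pexpr R n * bool)),
    S = [set x | has (fun l => all (fun pb =>
             if pb.2 then 0 < peval pb.1 x else peval pb.1 x == 0) l) L].

Fixpoint iterD (R : realType) (W : normedModType R) (vs : seq W) (g : W -> R)
  : W -> R :=
  match vs with
  | [::] => g
  | v :: vs' => fun z => 'D_v (iterD vs' g) z
  end.

Definition smooth (R : realType) (W : normedModType R) (g : W -> R) : Prop :=
  forall vs : seq W, forall z, differentiable (iterD vs g) z.

Definition caff (R : realType) (n m : nat) (f0 : 'cV[R]_n -> 'cV[R]_n)
  (fs : 'I_m -> 'cV[R]_n -> 'cV[R]_n) (x : 'cV[R]_n) (u : 'cV[R]_m) : 'cV[R]_n :=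
  f0 x + \sum_(i < m) u i 0 *: fs i x.

Definition inputset (R : realType) (p m : nat) (A : 'M[R]_(p, m)) (b : 'cV[R]_p)
  : set 'cV[R]_m := [set u | forall j : 'I_p, b j 0 <= (A *m u) j 0].

Definition dVdt (R : realType) (n : nat) (V : 'cV[R]_n * R -> R) (x : 'cV[R]_n)
  (t : R) : R := 'D_((0 : 'cV[R]_n), 1) V (x, t).

Definition dVdx (R : realType) (n : nat) (V : 'cV[R]_n * R -> R) (i : 'I_n)
  (x : 'cV[R]_n) (t : R) : R := 'D_((delta_mx i 0 : 'cV[R]_n), 0) V (x, t).

Definition Vdot (R : realType) (n m : nat) (V : 'cV[R]_n * R -> R)
  (f0 : 'cV[R]_n -> 'cV[R]_n) (fs : 'I_m -> 'cV[R]_n -> 'cV[R]_n)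
  (t : R) (x : 'cV[R]_n) (u : 'cV[R]_m) : R :=
  dVdt V x t + \sum_(i < n) dVdx V i x t * (caff f0 fs x u) i 0.

Definition cl_traj (R : realType) (n m : nat) (f0 : 'cV[R]_n -> 'cV[R]_n)
  (fs : 'I_m -> 'cV[R]_n -> 'cV[R]_n) (k : 'cV[R]_n -> R -> 'cV[R]_m)
  (Tf : R) (xt : R -> 'cV[R]_n) : Prop :=
  {within `[0, Tf], continuous xt} /\
  forall t, 0 < t < Tf -> is_derive t 1 xt (caff f0 fs (xt t) (k (xt t) t)).

(* Main.v *)
Require Import Defs.
From HB Require Import structures.
From mathcomp Require Import all_boot all_order all_algebra.
From mathcomp Require Import all_classical all_reals all_analysis.
From mathcomp Require Import lra.
Import Order.TTheory GRing.Theory Num.Theory.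
Import numFieldNormedType.Exports.
Local Open Scope classical_set_scope.
Local Open Scope ring_scope.

Lemma dV_pair (R : realType) (n : nat) (V : 'cV[R]_n * R -> R) x t (dx : 'cV[R]_n) :
  differentiable V (x, t) ->
  'd V (x, t) (dx, 1) = dVdt V x t + \sum_(i < n) dVdx V i x t * dx i 0.
Proof.
move=> dV.
rewrite /dVdt /dVdx deriveE //.
have -> : (dx, 1%R) = ((0 : 'cV[R]_n), 1%R) + (dx, 0%R) :> 'cV[R]_n * R by rewrite -[RHS]/(0 + dx, 1 + 0) add0r addr0.
rewrite linearD; congr (_ + _).
have dxE : dx = \sum_(i < n) dx i 0 *: (delta_mx i 0 : 'cV[R]_n).
  apply/matrixP => i j; rewrite ord1 summxE (bigD1 i) //= !mxE eqxx mulr1 big1 ?addr0 //.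
  by move=> k ki; rewrite !mxE eq_sym (negbTE ki) mulr0.
rewrite {1}dxE.
pose h := fun v : 'cV[R]_n => 'd V (x, t) (v, 0%R).
have hD : {morph h : a b / a + b >-> a + b}.
  move=> a b; rewrite /h -linearD; congr ('d V (x, t) _).
  by rewrite -[RHS]/(a + b, 0 + 0) addr0.
have h0 : h 0 = 0.
  by rewrite /h -[((0 : 'cV[R]_n), 0%R)]/(0 : 'cV[R]_n * R) linear0.
rewrite -/(h _) (big_morph h hD h0); apply: eq_bigr => i _.
rewrite /h deriveE // mulrC -linearZ /=; congr ('d V (x, t) _).
by rewrite -[RHS]/(dx i 0 *: (delta_mx i 0 : 'cV[R]_n), dx i 0 * 0) mulr0.
Qed.

Lemma W_derive (R : realType) (n : nat) (V : 'cV[R]_n * R -> R)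
  (xt : R -> 'cV[R]_n) (c : R) (dx : 'cV[R]_n) :
  differentiable V (xt c, c) -> is_derive c 1 xt dx ->
  is_derive c 1 (fun s => V (xt s, s))
    (dVdt V (xt c) c + \sum_(i < n) dVdx V i (xt c) c * dx i 0).
Proof.
move=> dV dxt.
have dxd : differentiable xt c by apply/derivable1_diffP; exact: ex_derive.
have did : differentiable (@id R) c by exact: ex_diff.
have dg : differentiable (fun s => (xt s, s)) c.
  exact: (differentiable_pair dxd did).
have dW : differentiable (V \o (fun s => (xt s, s))) c.
  exact: differentiable_comp.
rewrite -dV_pair //.
have := derivableP (@diff_derivable _ _ _ _ _ (1:R) dW).
rewrite deriveE // diff_comp // diff_pair //=.
rewrite -(@deriveE _ _ _ _ _ (1:R) dxd) derive_val.
have -> : 'd id c 1 = 1 :> R by rewrite (@diff_val _ _ _ _ _ _ _ (is_diff_id c)).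
by [].
Qed.

Lemma Wcont (R : realType) (n : nat) (V : 'cV[R]_n * R -> R)
  (xt : R -> 'cV[R]_n) (A : set R) :
  (forall z, differentiable V z) -> {within A, continuous xt} ->
  {within A, continuous (fun s => V (xt s, s))}.
Proof.
move=> dV xtc.
apply/subspace_continuousP => s As.
have h1 := (@subspace_continuousP _ A _ xt).1 xtc s As.
have h2 : (fun s => (xt s, s)) @ within A (nbhs s) --> (xt s, s).
  exact: (cvg_pair h1 (cvg_within A)).
apply: (cvg_comp _ _ h2).
rewrite /from_subspace /=.
exact: (differentiable_continuous (dV (xt s, s))).
Qed.

Lemma traj_ok (R : realType) (n m : nat)
  (f0 : 'cV[R]_n -> 'cV[R]_n) (fs : 'I_m -> 'cV[R]_n -> 'cV[R]_n)
  (k : 'cV[R]_n -> R -> 'cV[R]_m)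
  (I S T : set 'cV[R]_n) (Tf : R) (V : 'cV[R]_n * R -> R) (xt : R -> 'cV[R]_n) :
  (forall z, differentiable V z) -> 0 < Tf ->
  (forall x, I x -> V (x, 0) < 0) ->
  (forall x, ~ (interior T) x -> 0 < V (x, Tf)) ->
  (forall t x, 0 <= t <= Tf -> ~ (interior S) x -> 0 < V (x, t)) ->
  (forall x t, S x -> 0 <= t <= Tf -> Vdot V f0 fs t x (k x t) < 0) ->
  I (xt 0) -> cl_traj f0 fs k Tf xt ->
  (forall t, 0 <= t <= Tf -> S (xt t)) /\ (interior T) (xt Tf).
Proof.
move=> dV Tf0 C1 C2 C3 Kneg I0 [xtc xtd].
pose W s := V (xt s, s).
have Wc : {within `[0, Tf], continuous W} := @Wcont _ _ V xt _ dV xtc.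
have intS t : 0 <= t <= Tf -> W t < 0 -> (interior S) (xt t).
  move=> tI Wt; apply: contrapT => nS; have := C3 t (xt t) tI nS.
  by move/(lt_trans Wt); rewrite ltxx.
suff Wneg : forall t, 0 <= t <= Tf -> W t < 0.
  split; first by move=> t tI; apply: interior_subset; apply: intS => //; exact: Wneg.
  apply: contrapT => nT; have := C2 _ nT.
  have Wt : W Tf < 0 by apply: Wneg; rewrite lexx ltW.
  by move/(lt_trans Wt); rewrite ltxx.
move=> t1 /andP[t10 t1T]; rewrite ltNge; apply/negP => Wt1.
pose P := [set t | (0 <= t <= Tf) /\ 0 <= W t].
have Pt1 : P t1 by split; rewrite ?t10.
have lbP : lbound P 0 by move=> t [/andP[]].
have hlb : has_lbound P by exists 0.
have hinf : has_inf P by split; [exists t1|].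
pose t0 := inf P.
have t0ge : 0 <= t0 by apply: lb_le_inf; [exists t1|].
have t0le : t0 <= t1 by apply: ge_inf.
have before s : 0 <= s < t0 -> W s < 0.
  move=> /andP[s0 st0]; rewrite ltNge; apply/negP => Ws.
  have : t0 <= s.
    apply: ge_inf => //; split => //; rewrite s0 /=.
    by apply: (le_trans (ltW st0)); apply: (le_trans t0le).
  by rewrite leNgt st0.
have t0I : `[0, Tf]%classic t0 by rewrite /= in_itv /= t0ge (le_trans t0le).
have Wt0 : 0 <= W t0.
  rewrite leNgt; apply/negP => Wt0.
  have := (@subspace_continuousP _ `[0, Tf] _ W).1 Wc t0 t0I.
  move=> /cvgr_lt /(_ 0 Wt0) /nbhs_ballP [e e0 He].
  have [p [/andP[p0 pT] Wp] pe] := inf_adherent e0 hinf.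
  have t0p : t0 <= p by apply: ge_inf => //; split => //; rewrite p0.
  have : ball t0 e p.
    rewrite -ball_normE /= ler0_norm ?subr_le0 // opprB ltrBlDl //; rewrite addrC.
  move=> /He /=; rewrite in_itv /= p0 pT => /(_ isT).
  by rewrite ltNge Wp.
have t0pos : 0 < t0.
  rewrite lt_neqAle t0ge andbT; apply/eqP => t00.
  have W0 : W 0 < 0 by exact: C1.
  by move: Wt0; rewrite -t00 => /le_lt_trans/(_ W0); rewrite ltxx.
have derivs x : x \in `]0, t0[ ->
    is_derive x 1 W (Vdot V f0 fs x (xt x) (k (xt x) x)).
  rewrite in_itv /= => /andP[x0 xt0].
  apply: W_derive => //; apply: xtd.
  by rewrite x0 /= (lt_le_trans xt0) // (le_trans t0le).
have Wc' : {within `[0, t0], continuous W}.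
  apply: continuous_subspaceW Wc => x /=; rewrite !in_itv /= => /andP[-> xt0].
  by rewrite (le_trans xt0) // (le_trans t0le).
have [c cI eq] := MVT t0pos derivs Wc'.
move: cI; rewrite in_itv /= => /andP[c0 ct0].
have cI : 0 <= c <= Tf by rewrite (ltW c0) /= (le_trans (ltW ct0)) // (le_trans t0le).
have Wc0 : W c < 0 by apply: before; rewrite (ltW c0).
have Sc : S (xt c) by apply: interior_subset; exact: intS.
have dneg := Kneg _ _ Sc cI.
have W00 : W 0 < 0 by exact: C1.
have : W t0 - W 0 < 0 by rewrite eq subr0 pmulr_llt0.
rewrite subr_lt0 => /(lt_trans)/(_ W00) => /(le_lt_trans Wt0).
by rewrite ltxx.
Qed.

Lemma cont_sum (K : numFieldType) (Vt : normedModType K) (Tt : topologicalType)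
  (I : Type) (r : seq I) (P : pred I) (F : I -> Tt -> Vt) (x : Tt) :
  (forall i, {for x, continuous (F i)}) ->
  {for x, continuous (fun z => \sum_(i <- r | P i) F i z)}.
Proof.
move=> Fc; elim: r => [|i r IH].
  have -> : (fun z => \sum_(i <- [::] | P i) F i z) = fun=> 0.
    by apply/funext => z; rewrite big_nil.
  exact: cvg_cst.
case Pi: (P i).
  have -> : (fun z => \sum_(j <- i :: r | P j) F j z) =
    (F i + (fun z => \sum_(j <- r | P j) F j z)).
    by apply/funext => z; rewrite big_cons Pi.
  exact: (continuousD (Fc i) IH).
have -> : (fun z => \sum_(j <- i :: r | P j) F j z) =
    (fun z => \sum_(j <- r | P j) F j z).
  by apply/funext => z; rewrite big_cons Pi.
exact: IH.
Qed.

Lemma sum_ge_term (R : realDomainType) (I : eqType) (r : seq I) (F : I -> R) j :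
  j \in r -> (forall i, i \in r -> 0 <= F i) -> F j <= \sum_(i <- r) F i.
Proof.
elim: r => [|i r IH] //; rewrite inE big_cons => /orP[/eqP->|jr] Fge.
  by rewrite lerDl big_seq sumr_ge0 // => k kr; apply: Fge; rewrite inE kr orbT.
rewrite -[F j]add0r lerD //; first by apply: Fge; rewrite inE eqxx.
by apply: IH => // k kr; apply: Fge; rewrite inE kr orbT.
Qed.

Lemma sum_lt0_term (R : realDomainType) (I : eqType) (r : seq I) (F : I -> R) j :
  j \in r -> (forall i, i \in r -> F i <= 0) -> F j < 0 -> \sum_(i <- r) F i < 0.
Proof.
elim: r => [|i r IH] //; rewrite inE big_cons => /orP[/eqP->|jr] Fle Fj.
  rewrite -[X in _ < X]addr0; apply: ltr_leD => //; rewrite big_seq sumr_le0 // => k kr; apply: Fle; by rewrite inE kr orbT.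
rewrite -[X in _ < X]add0r; apply: ler_ltD; first by apply: Fle; rewrite inE eqxx.
by apply: IH => // k kr; apply: Fle; rewrite inE kr orbT.
Qed.

Lemma VdotE (R : realType) (n m : nat) (V : 'cV[R]_n * R -> R)
  (f0 : 'cV[R]_n -> 'cV[R]_n) (fs : 'I_m -> 'cV[R]_n -> 'cV[R]_n) t x u :
  Vdot V f0 fs t x u = Vdot V f0 fs t x 0 +
    \sum_(l < m) u l 0 * \sum_(i < n) dVdx V i x t * fs l x i 0.
Proof.
rewrite /Vdot /caff -addrA; congr (_ + _).
under eq_bigr do rewrite mxE summxE.
under [X in _ = X + _]eq_bigr do rewrite mxE summxE.
under [X in _ = _ + X]eq_bigr do rewrite big_distrr.
rewrite exchange_big /= -big_split /=; apply: eq_bigr => i _.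
rewrite mulrDr; congr (_ + _).
  by rewrite big1 ?addr0 // => l _; rewrite !mxE mul0r.
by rewrite big_distrr; apply: eq_bigr => l _; rewrite !mxE mulrCA.
Qed.

Lemma Vdot_conv (R : realType) (n m : nat) (V : 'cV[R]_n * R -> R)
  (f0 : 'cV[R]_n -> 'cV[R]_n) (fs : 'I_m -> 'cV[R]_n -> 'cV[R]_n) t x
  (J : Type) (r : seq J) (a : J -> R) (u : J -> 'cV[R]_m) :
  \sum_(j <- r) a j = 1 ->
  Vdot V f0 fs t x (\sum_(j <- r) a j *: u j) =
  \sum_(j <- r) a j * Vdot V f0 fs t x (u j).
Proof.
move=> a1.
under [RHS]eq_bigr do rewrite VdotE mulrDr.
rewrite big_split /= -big_distrl /= a1 mul1r VdotE; congr (_ + _).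
have e l : (\sum_(j <- r) a j *: u j) l 0 = \sum_(j <- r) a j * u j l 0.
  by rewrite summxE; apply: eq_bigr => j _; rewrite mxE.
transitivity (\sum_(l < m) \sum_(j <- r) a j * u j l 0 *
     \sum_(i < n) dVdx V i x t * fs l x i 0).
  apply: eq_bigr => l _; rewrite -big_distrl /=; congr (_ * _); exact: e.
rewrite exchange_big /=; apply: eq_bigr => j _.
rewrite big_distrr /=; apply: eq_bigr => l _.
by rewrite mulrA.
Qed.

Lemma Vdot_cont (R : realType) (n m : nat) (V : 'cV[R]_n * R -> R)
  (f0 : 'cV[R]_n -> 'cV[R]_n) (fs : 'I_m -> 'cV[R]_n -> 'cV[R]_n) (u : 'cV[R]_m) :
  continuous f0 -> (forall i, continuous (fs i)) -> smooth V ->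
  continuous (fun z : 'cV[R]_n * R => Vdot V f0 fs z.2 z.1 u).
Proof.
move=> hf0 hfs sV.
have hD (v : 'cV[R]_n * R) : continuous (fun z : 'cV[R]_n * R => 'D_v V (z.1, z.2)).
  have -> : (fun z : 'cV[R]_n * R => 'D_v V (z.1, z.2)) = 'D_v V.
    by apply/funext => -[].
  by move=> z; apply: differentiable_continuous; exact: (sV [:: v] z).
have hc (i : 'I_n) : continuous (fun z : 'cV[R]_n * R => caff f0 fs z.1 u i 0).
  move=> z.
  have h1 : continuous (fun x => caff f0 fs x u).
    move=> x; apply: continuousD; first exact: hf0.
    apply: cont_sum => l; apply: continuousZ; first exact: cst_continuous.
    exact: hfs.
  apply: (@continuous_comp _ _ _ (fun z0 : 'cV[R]_n * R => caff f0 fs z0.1 u) (fun M : 'cV[R]_n => M i 0)).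
    apply: (@continuous_comp _ _ _ fst (fun x => caff f0 fs x u)).
      exact: cvg_fst.
    exact: h1.
  exact: coord_continuous.
move=> z; rewrite /Vdot /dVdt /dVdx.
apply: cvgD; first exact: hD.
apply: cont_sum => i; apply: cvgM; first exact: hD.
exact: hc.
Qed.

Lemma Kcompact (R : realType) (n : nat) (S : set 'cV[R]_n) (Tf : R) :
  compact S -> compact (S `*` `[0, Tf]%classic : set ('cV[R]_n * R)).
Proof. by move=> cS; apply: compact_setX => //; exact: segment_compact. Qed.

Module PtM.
Section X. Variable R : realType. Variable n : nat.
HB.instance Definition _ := isPointed.Build ('cV[R]_n * R)%type (0, 0).
Lemma cc (K : set ('cV[R]_n * R)) : compact K -> cover_compact K.
Proof. by rewrite compact_cover. Qed.
End X.
End PtM.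

Lemma feedback (R : realType) (n m p : nat)
  (f0 : 'cV[R]_n -> 'cV[R]_n) (fs : 'I_m -> 'cV[R]_n -> 'cV[R]_n)
  (A : 'M[R]_(p, m)) (b : 'cV[R]_p) (S : set 'cV[R]_n) (Tf : R) (V : 'cV[R]_n * R -> R) :
  continuous f0 -> (forall i, continuous (fs i)) -> compact S -> smooth V ->
  (forall t x, 0 <= t <= Tf -> S x ->
     exists2 u, inputset A b u & Vdot V f0 fs t x u < 0) ->
  exists kk : 'cV[R]_n * R -> 'cV[R]_m,
    continuous kk /\
    (forall z, S z.1 -> 0 <= z.2 <= Tf ->
       inputset A b (kk z) /\ Vdot V f0 fs z.2 z.1 (kk z) < 0).
Proof.
move=> hf0 hfs cS sV C4.
pose K : set ('cV[R]_n * R) := S `*` `[0, Tf]%classic.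
have Kmem z : K z <-> S z.1 /\ 0 <= z.2 <= Tf.
  by rewrite /K /= in_itv.
have ex z : exists ur : 'cV[R]_m * R, K z ->
    [/\ inputset A b ur.1, 0 < ur.2 &
       forall w, ball z ur.2 w -> Vdot V f0 fs w.2 w.1 ur.1 < 0].
  have [/Kmem [Sz tz]|nKz] := pselect (K z); last by exists (0, 1).
  have [u Uu Vu] := C4 z.2 z.1 tz Sz.
  have := @Vdot_cont R n m V f0 fs u hf0 hfs sV z.
  move=> /cvgr_lt /(_ 0 Vu) /nbhs_ballP [e e0 He].
  by exists (u, e) => _; split.
have [g gP] := choice ex.
have cK : cover_compact K by apply: PtM.cc; exact: Kcompact.
have covK : K `<=` cover K (fun z => ball z ((g z).2 / 2)).
  move=> z Kz; exists z => //; apply: ballxx.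
  by have [_ r0 _] := gP z Kz; rewrite divr_gt0.
have [D0 D'K cov] := cK _ K _ (fun i _ => ball_open _ _) covK.
pose D' := finmap.enum_fset D0.
pose phi (j w : 'cV[R]_n * R) := Num.max 0 (1 - `|j - w| / (g j).2).
pose sm w := \sum_(j <- D') phi j w.
pose den w := Num.max (2^-1) (sm w).
pose kk w := (den w)^-1 *: \sum_(j <- D') phi j w *: (g j).1.
have phi_ge0 j w : 0 <= phi j w by rewrite /phi le_max lexx.
have den_gt0 w : 0 < den w.
  by rewrite /den lt_max invr_gt0 ltr0n.
have phic j : continuous (phi j).
  move=> w.
  have -> : phi j = (fun=> (0:R)) \max (fun w => 1 - `|j - w| / (g j).2).
    by apply/funext => y.
  apply: continuous_max; first exact: cst_continuous.
  apply: cvgB; first exact: cvg_cst.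
  apply: cvgM; last exact: cvg_cst.
  apply: cvg_norm; apply: cvgB; first exact: cvg_cst.
  exact: cvg_id.
exists kk; split.
  move=> w; rewrite /kk; apply: (@continuousZ _ _ _ (fun w => (den w)^-1) (fun w => \sum_(j <- D') phi j w *: (g j).1)).
    apply: continuousV; first by rewrite gt_eqF.
    have -> : den = (fun=> (2^-1:R)) \max sm by apply/funext => y.
    apply: continuous_max; first exact: cst_continuous.
    by apply: cont_sum => j; exact: phic.
  apply: cont_sum => j; apply: continuousZ; first exact: phic.
  exact: cst_continuous.
move=> z Sz tz.
have Kz : K z by apply/Kmem.
have [j jD' jz] := cov z Kz.
have jK : K j by have := D'K j jD'; rewrite inE.
have [_ rj0 Hj] := gP j jK.
have phij : 2^-1 <= phi j z.
  rewrite /phi le_max; apply/orP; right.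
  move: jz; rewrite -ball_normE /= => jz.
  have h : `|j - z| / (g j).2 <= 2^-1.
    by rewrite ler_pdivrMr // mulrC ltW.
  lra.
have jD : j \in D' by exact: jD'.
have DK i : i \in D' -> K i by move=> iD; have := D'K i iD; rewrite inE.
have smge : 2^-1 <= sm z.
  apply: (le_trans phij); apply: (@sum_ge_term _ _ D' (fun i => phi i z) j) => // i _; exact: phi_ge0.
have den_eq : den z = sm z by rewrite /den; apply/max_idPr.
have sm0 : 0 < sm z by apply: lt_le_trans smge; rewrite invr_gt0 ltr0n.
pose a i := (sm z)^-1 * phi i z.
have a1 : \sum_(i <- D') a i = 1 by rewrite -big_distrr /= mulVf // gt_eqF.
have kkE : kk z = \sum_(i <- D') a i *: (g i).1.
  by rewrite /kk den_eq scaler_sumr; apply: eq_bigr => i _; rewrite scalerA.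
have a_ge0 i : 0 <= a i by rewrite mulr_ge0 // invr_ge0 ltW.
split.
  move=> r; rewrite kkE.
  have -> : A *m (\sum_(i <- D') a i *: (g i).1) = \sum_(i <- D') a i *: (A *m (g i).1).
    by rewrite mulmx_sumr; apply: eq_bigr => i _; rewrite scalemxAr.
  rewrite summxE.
  have -> : b r 0 = \sum_(i <- D') a i * b r 0 by rewrite -big_distrl /= a1 mul1r.
  rewrite big_seq [X in _ <= X]big_seq; apply: ler_sum => i iD; rewrite mxE.
  apply: ler_wpM2l => //.
  by have [Ui _ _] := gP i (DK i iD); exact: Ui.
rewrite kkE (@Vdot_conv _ _ _ V f0 fs _ _ _ _ _ _ a1).
apply: (@sum_lt0_term _ _ D' _ j jD).
  move=> i iD; have [_ ri0 Hi] := gP i (DK i iD).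
  have [ph0|ph0] := eqVneq (phi i z) 0.
    by rewrite /a ph0 mulr0 mul0r.
  have ph : 0 < phi i z by rewrite lt_neqAle eq_sym ph0 phi_ge0.
  move: ph; rewrite /phi lt_max ltxx /= subr_gt0 ltr_pdivrMr // mul1r => iz.
  apply: mulr_ge0_le0 => //; apply: ltW; apply: Hi.
  by rewrite -ball_normE /=.
rewrite pmulr_rlt0; last by rewrite /a mulr_gt0 // ?invr_gt0 // (lt_le_trans _ phij) // invr_gt0 ltr0n.
apply: Hj; apply: (le_ball _ jz).
have r2 := rj0. lra.
Qed.

Theorem theorem10 (R : realType) (n m p : nat)
  (f0 : 'cV[R]_n -> 'cV[R]_n) (fs : 'I_m -> 'cV[R]_n -> 'cV[R]_n)
  (A : 'M[R]_(p, m)) (b : 'cV[R]_p)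
  (I S T : set 'cV[R]_n) (Tf : R) (V : 'cV[R]_n * R -> R) :
  continuous f0 -> (forall i, continuous (fs i)) ->
  compact I -> compact S -> compact T ->
  semialgebraic I -> semialgebraic S -> semialgebraic T ->
  I `<=` S -> T `<=` S ->
  0 < Tf ->
  smooth V ->
  (forall x, I x -> V (x, 0) < 0) ->
  (forall x, ~ (interior T) x -> 0 < V (x, Tf)) ->
  (forall t x, 0 <= t <= Tf -> ~ (interior S) x -> 0 < V (x, t)) ->
  (forall t x, 0 <= t <= Tf -> S x ->
     exists2 u, inputset A b u & Vdot V f0 fs t x u < 0) ->
  exists k : 'cV[R]_n -> R -> 'cV[R]_m,
    (forall x t, S x -> 0 <= t <= Tf -> inputset A b (k x t)) /\
    continuous (fun z : 'cV[R]_n * R => k z.1 z.2) /\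
    (forall xt : R -> 'cV[R]_n, I (xt 0) -> cl_traj f0 fs k Tf xt ->
       (forall t, 0 <= t <= Tf -> S (xt t)) /\ (interior T) (xt Tf)).
Proof.
move=> hf0 hfs cI cS cT _ _ _ IS TS Tf0 sV C1 C2 C3 C4.
have [kk [kkc kkP]] := @feedback R n m p f0 fs A b S Tf V hf0 hfs cS sV C4.
exists (fun x t => kk (x, t)); split; [|split].
- by move=> x t Sx tI; exact: (kkP (x, t) Sx tI).1.
- have -> : (fun z : 'cV[R]_n * R => kk (z.1, z.2)) = kk by apply/funext => -[].
  exact: kkc.
- move=> xt I0 tr.
  apply: (@traj_ok R n m f0 fs (fun x t => kk (x, t)) I S T Tf V xt) => //.
    by move=> z; exact: (sV [::] z).
  by move=> x t Sx tI; exact: (kkP (x, t) Sx tI).2.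
Qed.
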